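(* Let $(X_n)_{n\in\mathbb{Z}}$ be $L_2$-NED with constants $\nu(k)$, $k\in\mathbb{N}$, on a stationary process $(Z_n)_{n\in\mathbb{Z}}$, and let $g:\mathbb{R}\to\mathbb{R}$ be a function bounded by $K$ that satisfies the 2-variation condition (with respect to the distribution of $X_0$) with constant $L$. Then $(g(X_n))_{n\in\mathbb{Z}}$ is $L_2$-NED on $(Z_n)$ with constants $\sqrt{(L+4K^2)\nu(k)}$, $k\in\mathbb{N}$.
   Context: $\mathcal{F}_{Z,s,t}=\sigma(Z_u:s\le u\le t)$. A stationary process $(Y_n)$ is $L_2$-NED on $(Z_n)$ with constants $\nu(k)$ if $\|Y_0-\mathbb{E}[Y_0\mid\mathcal{F}_{Z,-k,k}]\|_2\le\nu(k)$ for $k\ge0$, with $\nu(k)\to0$. A function $g$ satisfies the $p$-variation condition with respect to the distribution of $X_0$ with constant $c$ if for every $\epsilon>0$, $\mathbb{E}[\sup_{x\in\mathbb{R}:|x-X_0|\le\epsilon}|g(x)-g(X_0)|^p]\le c\,\epsilon^p$. *)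

(* Defs.v *)
From HB Require Import structures.
From mathcomp Require Import all_boot all_order all_algebra.
From mathcomp Require Import all_classical all_reals all_analysis.
Set Implicit Arguments. Unset Strict Implicit. Unset Printing Implicit Defensive.
Import Order.TTheory GRing.Theory Num.Theory.
Local Open Scope classical_set_scope.
Local Open Scope ring_scope.

Section NED.
Context {R : realType} {d : measure_display} {T : measurableType d}.
Variable P : probability T R.

Definition stationary {dS : measure_display} {S : measurableType dS}
  (Y : int -> T -> S) : Prop :=
  (forall n, measurable_fun setT (Y n)) /\
  forall (m : nat) (t : 'I_m -> int) (B : 'I_m -> set S) (h : int),
    (forall i, measurable (B i)) ->
    P (\bigcap_i (Y (t i + h) @^-1` B i)) = P (\bigcap_i (Y (t i) @^-1` B i)).

Definition F_Z {dS : measure_display} {S : measurableType dS}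
  (Z : int -> T -> S) (s t : int) : set (set T) :=
  <<s [set A | exists u, exists B, [/\ s <= u <= t, measurable B &
                                       A = Z u @^-1` B] ] >>.

Definition is_condexp (F : set (set T)) (Y W : T -> R) : Prop :=
  P.-integrable setT (EFin \o Y) /\
  (forall B : set R, measurable B -> F (W @^-1` B)) /\
  P.-integrable setT (EFin \o W) /\
  forall A, F A -> (\int[P]_(x in A) (Y x)%:E = \int[P]_(x in A) (W x)%:E)%E.

Definition L2dist (Y W : T -> R) : \bar R :=
  Lnorm P 2%:E (EFin \o (fun x => Y x - W x)).

Definition L2NED {dS : measure_display} {S : measurableType dS}
  (Y : int -> T -> R) (Z : int -> T -> S) (nu : nat -> R) : Prop :=
  stationary Y /\ nu @ \oo --> 0 /\
  forall (k : nat) (W : T -> R),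
    is_condexp (F_Z Z (- k%:Z) k%:Z) (Y 0%R) W -> (L2dist (Y 0%R) W <= (nu k)%:E)%E.

(* Same notion, but only requiring the bound for some version of the
   conditional expectation (equivalent, by a.s. uniqueness and existence
   of conditional expectations of integrable variables). *)
Definition L2NED_some {dS : measure_display} {S : measurableType dS}
  (Y : int -> T -> R) (Z : int -> T -> S) (nu : nat -> R) : Prop :=
  stationary Y /\ nu @ \oo --> 0 /\
  forall k : nat, exists W : T -> R,
    is_condexp (F_Z Z (- k%:Z) k%:Z) (Y 0%R) W /\ (L2dist (Y 0%R) W <= (nu k)%:E)%E.

Definition p_variation (p : nat) (g : R -> R) (X0 : T -> R) (c : R) : Prop :=
  forall eps : R, 0 < eps ->
    (\int[P]_w ereal_sup [set ((`|g x - g (X0 w)| ^+ p)%R)%:E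
                          | x in [set x : R | (`|x - X0 w| <= eps)%R]]
     <= (c * eps ^+ p)%:E)%E.

End NED.

(* Main.v *)
Require Import Defs.
From HB Require Import structures.
From mathcomp Require Import all_boot all_order all_algebra.
From mathcomp Require Import all_classical all_reals all_analysis.
From mathcomp Require Import measurable_realfun.
From mathcomp Require Import ring lra zify.
Import Order.TTheory GRing.Theory Num.Theory.
Local Open Scope classical_set_scope.
Local Open Scope ring_scope.

Set Implicit Arguments. Unset Strict Implicit. Unset Printing Implicit Defensive.

Section Aux.
Context {R : realType} {d : measure_display} {T : measurableType d}.
Variable P : probability T R.

Lemma le_integral_any (f g : T -> \bar R) :
  (forall x, (0 <= f x)%E) -> (forall x, (f x <= g x)%E) ->
  (\int[P]_x f x <= \int[P]_x g x)%E.
Proof.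
move=> f0 fg.
have g0 : forall x, (0 <= g x)%E by move=> x; exact: le_trans (f0 x) (fg x).
rewrite !ge0_integralTE//.
apply: le_ereal_sup => _ [h hf <-]; exists h => //= x.
exact: le_trans (hf x) (fg x).
Qed.

Definition Fmeas (F : set (set T)) (V : T -> R) :=
  forall B, measurable B -> F (V @^-1` B).

Lemma Fmeas_comp F V (phi : R -> R) :
  measurable_fun setT phi -> Fmeas F V -> Fmeas F (phi \o V).
Proof.
move=> mphi hV B mB.
have := mphi measurableT B mB; rewrite setTI => mB'.
by rewrite comp_preimage; exact: hV.
Qed.

Lemma Fmeas_measurable F V : (forall A, F A -> measurable A) ->
  Fmeas F V -> measurable_fun setT V.
Proof. by move=> hF hV _ B mB; rewrite setTI; exact: hF (hV B mB). Qed.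

Lemma bnd (f : T -> R) M : (forall x, `|f x| <= M) -> [bounded f x | x in setT].
Proof.
move=> hM; exists M; split; first exact: num_real.
by move=> y My x _; exact: le_trans (hM x) (ltW My).
Qed.

Lemma intMb (U V : T -> R) M : P.-integrable setT (EFin \o U) ->
  measurable_fun setT V -> (forall x, `|V x| <= M) ->
  P.-integrable setT (EFin \o (fun x => U x * V x)).
Proof.
move=> iU mV hM; have := integrableMl measurableT iU mV (bnd hM).
by have -> : (EFin \o (fun x => U x * V x)) = ((EFin \o U) \* (EFin \o V))%E
  by apply/funext => x /=; rewrite EFinM.
Qed.

Lemma discr (a M : R) (m : nat) (v : R) : 0 < a -> `|v| <= M -> M * a < m%:R ->
  exists j0 : 'I_(2 * m), (Num.floor (v * a) = j0%:Z - m%:Z)%R.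
Proof.
move=> a0 hv hm.
set z := Num.floor (v * a).
have [hv1 hv2] : - M <= v /\ v <= M by move: hv; rewrite ler_norml => /andP.
have h1 : - M * a <= v * a by rewrite ler_pM2r.
have h2 : v * a <= M * a by rewrite ler_pM2r.
have zlo : (- m%:Z < z + 1)%R.
  rewrite -(ltr_int R) intrN.
  have := floorD1_gt (v * a); rewrite -/z; lra.
have zhi : (z < m%:Z)%R.
  rewrite /z floor_lt_int; lra.
have hj : (absz (z + m%:Z)%R < 2 * m)%N by lia.
by exists (Ordinal hj) => /=; lia.
Qed.

Lemma orth_step F (hF : forall A, F A -> measurable A) (U V : T -> R) (M : R) (n : nat) :
  P.-integrable setT (EFin \o U) ->
  (forall A, F A -> \int[P]_(x in A) (U x)%:E = 0)%E ->
  Fmeas F V -> (forall x, `|V x| <= M) ->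
  (`| \int[P]_x (U x * V x)%:E | <= (n.+1%:R^-1)%:E * \int[P]_x (`|U x|)%:E)%E.
Proof.
move=> iU hU hV hM.
have mV := Fmeas_measurable hF hV.
have mU : measurable_fun setT U by apply/measurable_EFinP; exact: measurable_int iU.
set a : R := n.+1%:R.
have a0 : 0 < a by rewrite ltr0n.
set m := (Num.trunc (M * a)).+1.
have hm : M * a < m%:R by rewrite /m; exact: truncnS_gt.
pose c (j : 'I_(2 * m)) : R := (j%:Z - m%:Z)%:~R / a.
pose A (j : 'I_(2 * m)) := [set y | Num.floor (V y * a) = j%:Z - m%:Z].
have FA : forall j, F (A j).
  move=> j.
  have -> : A j = ((fun y => y * a) \o V) @^-1` `[(j%:Z - m%:Z)%:~R, (j%:Z - m%:Z + 1)%:~R[.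
    apply/seteqP; split => y /=; rewrite in_itv /=.
      by move=> <-; exact: floor_itv.
    by move=> h; apply/eqP; rewrite floor_eq.
  apply: (Fmeas_comp _ hV); last exact: measurable_itv.
  exact: mulrr_measurable.
have mA : forall j, measurable (A j) by move=> j; exact: hF.
pose Vn x := \sum_(j < 2 * m) c j * \1_(A j) x.
have VnE : forall x, Vn x = (Num.floor (V x * a))%:~R / a.
  move=> x; have [j0 hj0] := discr a0 (hM x) hm.
  rewrite /Vn (bigD1 j0) //= big1 ?addr0.
    by rewrite indicE mem_set // mulr1 /c hj0.
  move=> j jj0; rewrite indicE memNset ?mulr0 // /A /= hj0 => h.
  by move/eqP: jj0; apply; apply: val_inj => /=; lia.
have hVn : forall x, `|V x - Vn x| <= a^-1.
  move=> x; rewrite VnE.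
  set f := (Num.floor (V x * a))%:~R.
  have f1 : f <= V x * a by exact: floor_le.
  have f2 : V x * a < f + 1 by rewrite /f -[1]/(1%:~R) -intrD; exact: floorD1_gt.
  have -> : V x - f / a = (V x * a - f) * a^-1 by field; rewrite lt0r_neq0.
  have ai : 0 <= a^-1 by rewrite invr_ge0 ltW.
  rewrite normrM (ger0_norm ai).
  rewrite -[leRHS]mul1r ler_wpM2r ?invr_ge0 ?(ltW a0) //.
  by rewrite ler_norml; apply/andP; split; lra.
have mVn : measurable_fun setT Vn.
  apply: measurable_sum => j.
  by apply: measurable_funM => //; exact: measurable_indic (mA j).
have a1 : a^-1 <= 1 by rewrite invf_le1 // /a ler1n.
have bVn : forall x, `|Vn x| <= M + 1.
  move=> x; have h2 := hVn x; have h3 := hM x.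
  have -> : Vn x = V x - (V x - Vn x) by ring.
  apply: le_trans (ler_normB _ _) _; apply: lerD => //; exact: le_trans h2 a1.
have iUV := intMb iU mV hM.
have iUVn := intMb iU mVn bVn.
have hint : (\int[P]_x (U x * Vn x)%:E = 0)%E.
  have iUind : forall j, P.-integrable setT (EFin \o (fun x => U x * \1_(A j) x)).
    move=> j; apply: (intMb (M := 1) iU (measurable_indic (mA j))).
    by move=> x; rewrite indicE; case: (x \in A j); rewrite ?normr1 ?normr0.
  under eq_integral => x _ do rewrite /Vn mulr_sumr -sumEFin.
  rewrite integral_sum //; last first.
    move=> j.
    have -> : (fun x => (U x * (c j * \1_(A j) x))%:E) =
      (fun x => ((c j)%:E * (EFin \o (fun x => (U x * \1_(A j) x)%R)) x)%E).
      by apply/funext => x /=; rewrite -EFinM mulrCA.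
    exact: integrableZl.
  apply: big1 => j _.
  under eq_integral => x _ do rewrite mulrCA EFinM.
  rewrite integralZl //.
  have -> : (\int[P]_x (U x * \1_(A j) x)%:E = 0)%E.
    rewrite -(hU _ (FA j)) (integral_mkcond (A j)); apply: eq_integral => x _.
    by rewrite patchE indicE; case: (x \in A j) => /=; rewrite ?mulr1 ?mulr0.
  by rewrite mule0.
  exact: iUind.
have e : (\int[P]_x (U x * V x)%:E = \int[P]_x (U x * (V x - Vn x))%:E)%E.
  rewrite -[LHS]sube0 -hint -integralB_EFin //; apply: eq_integral => x _.
  by rewrite mulrBr EFinB.
have mUd : measurable_fun setT (fun x => U x * (V x - Vn x)).
  exact: measurable_funM mU (measurable_funB mV mVn).
rewrite e; apply: le_trans (le_abse_integral _ _ _) _ => //.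
  exact/measurable_EFinP.
rewrite -ge0_integralZl_EFin //.
- apply: ge0_le_integral => //.
  + by apply/measurable_EFinP; apply: measurableT_comp.
  + apply: emeasurable_funM => //.
    by apply/measurable_EFinP; apply: measurableT_comp.
  + move=> x _; rewrite /= -EFinM lee_fin normrM mulrC ler_wpM2r //.
- by do 2 apply: measurableT_comp => //.
- by rewrite invr_ge0 ltW.
Qed.

Lemma orth F (hF : forall A, F A -> measurable A) (U V : T -> R) (M : R) :
  P.-integrable setT (EFin \o U) ->
  (forall A, F A -> \int[P]_(x in A) (U x)%:E = 0)%E ->
  Fmeas F V -> (forall x, `|V x| <= M) ->
  (\int[P]_x (U x * V x)%:E = 0)%E.
Proof.
move=> iU hU hV hM.
have step := orth_step hF _ iU hU hV hM.
have mV := Fmeas_measurable hF hV.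
have iUV := intMb iU mV hM.
have := integrable_fin_num measurableT iUV.
set I := (\int[P]_x _)%E => finI.
have iaU : P.-integrable setT (EFin \o (fun x => `|U x|)).
  by apply: (eq_integrable measurableT _ _ _ (integrable_abse iU)) => x _.
set C := (\int[P]_x (`|U x|)%:E)%E.
have finC : C \is a fin_num by exact: (integrable_fin_num measurableT iaU).
have C0 : (0 <= C)%E by apply: integral_ge0 => x _; rewrite lee_fin.
have step' : forall n : nat, (`|I| <= (n.+1%:R^-1)%:E * C)%E.
  by move=> n; exact: step.
clear step; move: step'; rewrite -(fineK finI) -(fineK finC) => step.
have c0 : 0 <= fine C by rewrite fine_ge0.
set r := fine I in step *; set c := fine C in step c0 *.
suff -> : r = 0 by [].
apply/eqP; apply/negPn/negP => r0.
have r0' : 0 < `|r| by rewrite normr_gt0.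
have := step (Num.trunc (c / `|r|)).
rewrite -EFinM /= lee_fin.
have := truncnS_gt (c / `|r|).
set N := (Num.trunc _).+1%:R => hN hle.
have N0 : 0 < N by rewrite /N ltr0n.
move: hN; rewrite ltr_pdivrMr // => hN.
have : `|r| <= N^-1 * c by [].
rewrite ler_pdivlMl //; lra.
Qed.

End Aux.

Section Aux2.
Context {R : realType} {d : measure_display} {T : measurableType d}.
Variable P : probability T R.

Lemma ae_ub F (hF : forall A, F A -> measurable A) (Y W : T -> R) (K : R) :
  P.-integrable setT (EFin \o Y) -> P.-integrable setT (EFin \o W) -> Fmeas F W ->
  (forall A, F A -> \int[P]_(x in A) (Y x)%:E = \int[P]_(x in A) (W x)%:E)%E ->
  (forall x, Y x <= K) ->
  {ae P, forall x, W x <= K}.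
Proof.
move=> iY iW hW hYW YK.
pose A := W @^-1` `]K, +oo[.
have FA : F A by apply: hW; exact: measurable_itv.
have mA : measurable A := hF _ FA.
have iWA : P.-integrable A (EFin \o W) by exact: integrableS iW.
have iYA : P.-integrable A (EFin \o Y) by exact: integrableS iY.
have iKA : P.-integrable A (EFin \o cst K) by exact: finite_measure_integrable_cst.
have e1 : (\int[P]_(x in A) ((W x)%:E - (cst K x)%:E) =
           \int[P]_(x in A) ((Y x)%:E - (cst K x)%:E))%E.
  by rewrite !integralB_EFin // hYW.
have le1 : (\int[P]_(x in A) ((Y x)%:E - (cst K x)%:E) <= 0)%E.
  rewrite -(integral0 P A).
  apply: le_integral => //.
  - by apply: (eq_integrable mA _ _ _ (integrableB mA iYA iKA)) => x _.
  - have := finite_measure_integrable_cst P 0 mA.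
    by apply: eq_integrable => // x _.
  - by move=> x _; rewrite /= -EFinB lee_fin subr_le0.
have ge1 : forall x, A x -> (0 <= (W x)%:E - (cst K x)%:E)%E.
  move=> x; rewrite /A /= in_itv /= andbT => Kx.
  by rewrite -EFinB lee_fin subr_ge0 ltW.
have mWK : measurable_fun A (fun x => (W x)%:E - (cst K x)%:E)%E.
  by apply: emeasurable_funB; [exact: measurable_int iWA | exact: measurable_int iKA].
have z : (\int[P]_(x in A) `|(W x)%:E - (cst K x)%:E| = 0)%E.
  rewrite (eq_integral (fun x => (W x)%:E - (cst K x)%:E))%E; last first.
    by move=> x /set_mem Ax; rewrite gee0_abs // ge1.
  apply/eqP; rewrite eq_le; apply/andP; split; first by rewrite e1.
  by apply: integral_ge0.
have := (ae_eq_integral_abs P mA mWK).1 z.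
apply: filterS => x /= h; rewrite leNgt; apply/negP => Kx.
have Ax : A x by rewrite /A /= in_itv /= andbT.
by move: (h Ax) => /eqP; rewrite -EFinB eqe subr_eq0 gt_eqF.
Qed.

Lemma bint (f : T -> R) M : measurable_fun setT f -> (forall x, `|f x| <= M) ->
  P.-integrable setT (EFin \o f).
Proof.
move=> mf hM; apply: measurable_bounded_integrable => //.
  by move: (probability_setT P) => /= ->; rewrite ltry.
exact: bnd hM.
Qed.

Lemma ae_lb F (hF : forall A, F A -> measurable A) (Y W : T -> R) (K : R) :
  P.-integrable setT (EFin \o Y) -> P.-integrable setT (EFin \o W) -> Fmeas F W ->
  (forall A, F A -> \int[P]_(x in A) (Y x)%:E = \int[P]_(x in A) (W x)%:E)%E ->
  (forall x, - K <= Y x) ->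
  {ae P, forall x, - K <= W x}.
Proof.
move=> iY iW hW hYW YK.
have c1 : forall x : T, `|cst (-1) x| <= 1 :> R by move=> x; rewrite /= normrN normr1.
have iY' := intMb iY (measurable_cst _) c1.
have iW' := intMb iW (measurable_cst _) c1.
have hW' : Fmeas F ((fun x => x * -1) \o W).
  by apply: Fmeas_comp => //; exact: mulrr_measurable.
have hYW' : forall A, F A -> (\int[P]_(x in A) ((Y x * cst (-1) x))%:E =
                               \int[P]_(x in A) ((W x * cst (-1) x))%:E)%E.
  move=> A FA; have mA := hF _ FA.
  under eq_integral do rewrite /= EFinM muleC.
  rewrite integralZl //; last exact: integrableS iY.
  under [RHS]eq_integral do rewrite /= EFinM muleC.
  by rewrite integralZl ?hYW //; exact: integrableS iW.
have hK : forall x, Y x * cst (-1) x <= K by move=> x; rewrite /= mulrN1 lerNl.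
have := ae_ub hF iY' iW' hW' hYW' hK.
by apply: filterS => x /= h; rewrite lerNl -mulrN1.
Qed.

Lemma key F (hF : forall A, F A -> measurable A) (Y W h : T -> R) (K : R) :
  0 <= K -> measurable_fun setT Y -> (forall x, `|Y x| <= K) ->
  is_condexp P F Y W ->
  Fmeas F h -> (forall x, `|h x| <= K) ->
  (\int[P]_x ((Y x - W x)^+2)%:E <= \int[P]_x ((Y x - h x)^+2)%:E)%E.
Proof.
move=> K0 mY hY [iY [hW [iW hYW]]] hh bh.
have ub := ae_ub hF iY iW hW hYW (fun x => le_trans (ler_norm _) (hY x)).
have lb : {ae P, forall x, - K <= W x}.
  apply: (ae_lb hF iY iW hW hYW) => x.
  by rewrite lerNl; apply: le_trans (hY x); rewrite -normrN ler_norm.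
pose phi := fun x : R => Num.max (- K) (Num.min K x).
pose W' := phi \o W.
have mphi : measurable_fun setT phi.
  apply: measurable_maxr; first exact: measurable_cst.
  by apply: measurable_minr; [exact: measurable_cst | exact: measurable_id].
have hW' : Fmeas F W' by exact: Fmeas_comp.
have mW' : measurable_fun setT W' := Fmeas_measurable hF hW'.
have mW : measurable_fun setT W := Fmeas_measurable hF hW.
have mh : measurable_fun setT h := Fmeas_measurable hF hh.
have bW' : forall x, `|W' x| <= K.
  move=> x; rewrite ler_norml /W' /phi /= le_max ge_max lexx /=.
  apply/andP; split; first by rewrite -subr_ge0 opprK; exact: addr_ge0.
  by rewrite ge_min lexx.
have aeW : {ae P, forall x, W x = W' x}.
  apply: filterS2 ub lb => x h1 h2.
  by rewrite /W' /phi /= min_r // max_r.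
have iW' : P.-integrable setT (EFin \o W') := bint mW' bW'.
have hYW' : forall A, F A -> (\int[P]_(x in A) (Y x)%:E = \int[P]_(x in A) (W' x)%:E)%E.
  move=> A FA; have mA := hF _ FA; rewrite hYW //.
  apply: ae_eq_integral => //.
  - by apply/measurable_EFinP; exact: measurable_funS mW.
  - by apply/measurable_EFinP; exact: measurable_funS mW'.
  - by apply: filterS aeW => x -> _.
pose U := fun x => Y x - W' x.
have mU : measurable_fun setT U by exact: measurable_funB.
have bU : forall x, `|U x| <= K + K.
  by move=> x; apply: le_trans (ler_normB _ _) _; apply: lerD.
have iU : P.-integrable setT (EFin \o U) := bint mU bU.
have hU : forall A, F A -> (\int[P]_(x in A) (U x)%:E = 0)%E.
  move=> A FA; have mA := hF _ FA.
  rewrite /U; under eq_integral do rewrite EFinB.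
  rewrite integralB_EFin //; [|exact: integrableS iY|exact: integrableS iW'].
  by rewrite hYW' // subee // (integrable_fin_num mA (integrableS _ _ _ iW')).
have o1 := orth hF iU hU hW' bW'.
have o2 := orth hF iU hU hh bh.
have e1 : (\int[P]_x ((Y x - W x)^+2)%:E = \int[P]_x ((U x)^+2)%:E)%E.
  apply: ae_eq_integral => //.
  - apply/measurable_EFinP; apply: measurable_funX; exact: measurable_funB.
  - by apply/measurable_EFinP; exact: measurable_funX.
  - by apply: filterS aeW => x -> _.
rewrite e1.
pose a := fun x => U x ^+ 2.
pose b := fun x => 2 * (U x * W' x).
pose c := fun x => 2 * (U x * h x).
pose q := fun x => (Y x - h x) ^+ 2.
have ia : P.-integrable setT (EFin \o a).
  apply: (bint (M := (K + K) ^+ 2)); first exact: measurable_funX.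
  by move=> x; rewrite /a normrX lerXn2r ?nnegrE ?addr_ge0.
have iUW' := intMb iU mW' bW'.
have iUh := intMb iU mh bh.
have ib : P.-integrable setT (EFin \o b).
  have := integrableZl measurableT 2 iUW'.
  by apply: eq_integrable => // x _; rewrite /= EFinM.
have ic : P.-integrable setT (EFin \o c).
  have := integrableZl measurableT 2 iUh.
  by apply: eq_integrable => // x _; rewrite /= EFinM.
have iq : P.-integrable setT (EFin \o q).
  apply: (bint (M := (K + K) ^+ 2)).
    by apply: measurable_funX; exact: measurable_funB.
  move=> x; rewrite /q normrX lerXn2r ?nnegrE ?addr_ge0 //.
  by apply: le_trans (ler_normB _ _) _; apply: lerD.
have iab : P.-integrable setT (EFin \o (fun x => a x + b x)).
  have := integrableD measurableT ia ib.
  by apply: eq_integrable => // x _; rewrite /= EFinD.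
have Ib : (\int[P]_x (b x)%:E = 0)%E.
  under eq_integral do rewrite EFinM.
  by rewrite integralZl // o1 mule0.
have Ic : (\int[P]_x (c x)%:E = 0)%E.
  under eq_integral do rewrite EFinM.
  by rewrite integralZl // o2 mule0.
have L : (\int[P]_x (a x + b x - c x)%:E = \int[P]_x (a x)%:E)%E.
  under eq_integral do rewrite EFinB.
  rewrite (@integralB_EFin _ _ _ P setT (fun x => a x + b x) c measurableT iab ic).
  under eq_integral do rewrite EFinD.
  rewrite (integralD measurableT ia ib) Ib Ic.
  by rewrite adde0 sube0.
rewrite -L; apply: le_integral => //.
  have := integrableB measurableT iab ic.
  by apply: eq_integrable => // x _; rewrite /= EFinB.
move=> x _; rewrite lee_fin -subr_ge0.
have -> : (Y x - h x) ^+ 2 - (a x + b x - c x) = (W' x - h x) ^+ 2.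
  by rewrite /a /b /c /U; ring.
exact: sqr_ge0.
Qed.

Lemma varb (g : R -> R) (X0 Xt : T -> R) (K L eps : R) :
  measurable_fun setT g -> measurable_fun setT X0 -> measurable_fun setT Xt ->
  (forall x, `|g x| <= K) -> 0 < eps ->
  p_variation P 2 g X0 L ->
  (\int[P]_x ((g (X0 x) - g (Xt x))^+2)%:E <=
   (L * eps^+2)%:E + ((4 * K^+2) / eps^+2)%:E * \int[P]_x ((X0 x - Xt x)^+2)%:E)%E.
Proof.
move=> mg mX0 mXt hg e0 pv.
have K0 : 0 <= K by apply: le_trans (hg 0).
pose Dx := fun x => X0 x - Xt x.
have mD : measurable_fun setT Dx by exact: measurable_funB.
pose A := (fun x => `|Dx x|) @^-1` `]-oo, eps].
have mA : measurable A.
  have := (measurableT_comp (@normr_measurable R setT) mD) measurableT _ (measurable_itv `]-oo, eps]).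
  by rewrite setTI.
pose q := fun x => (g (X0 x) - g (Xt x))^+2.
have mq : measurable_fun setT q.
  apply: measurable_funX; apply: measurable_funB; exact: measurableT_comp.
pose q1 := fun x => q x * \1_A x.
pose q2 := fun x => q x * \1_(~` A) x.
have q1_0 : forall x, 0 <= q1 x by move=> x; rewrite mulr_ge0 ?sqr_ge0 // indicE.
have q2_0 : forall x, 0 <= q2 x by move=> x; rewrite mulr_ge0 ?sqr_ge0 // indicE.
have mq1 : measurable_fun setT q1 by apply: measurable_funM => //; exact: measurable_indic.
have mq2 : measurable_fun setT q2.
  by apply: measurable_funM => //; apply: measurable_indic; exact: measurableC.
have qE : forall x, q x = q1 x + q2 x.
  move=> x; rewrite /q1 /q2 !indicE -mulrDr.
  case: (boolP (x \in A)) => xA.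
    have : x \notin ~` A by rewrite in_setC xA.
    by move/negbTE => ->; rewrite /= mulr1n mulr0n addr0 mulr1.
  have : x \in ~` A by rewrite in_setC xA.
  by move=> ->; rewrite /= mulr1n mulr0n add0r mulr1.
have split : (\int[P]_x ((g (X0 x) - g (Xt x))^+2)%:E =
              \int[P]_x (q1 x)%:E + \int[P]_x (q2 x)%:E)%E.
  rewrite -ge0_integralD //.
  - by apply: eq_integral => x _; rewrite -EFinD -qE.
  - by move=> x _; rewrite lee_fin.
  - exact/measurable_EFinP.
  - by move=> x _; rewrite lee_fin.
  - exact/measurable_EFinP.
rewrite split; apply: leeD.
  apply: le_trans (pv eps e0).
  apply: le_integral_any => x; first by rewrite lee_fin.
  rewrite /q1 indicE; case: (boolP (x \in A)) => xA /=.
    rewrite mulr1n mulr1; apply: ereal_sup_ubound => /=; exists (Xt x).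
      move/set_mem: xA; rewrite /A /= in_itv /=.
      by rewrite -normrN opprB.
    by rewrite /q -normrN opprB real_normK // num_real.
  rewrite mulr0n mulr0; apply: (le_trans _ (ereal_sup_ubound _)).
    2: by exists (X0 x) => //=; rewrite subrr normr0 ltW.
  by rewrite /= subrr normr0 expr0n lee_fin.
have c0 : 0 <= (4 * K^+2) / eps^+2.
  by apply: divr_ge0; [apply: mulr_ge0 => //; exact: sqr_ge0 | exact: sqr_ge0].
rewrite -ge0_integralZl_EFin //; last first.
- by apply/measurable_EFinP; exact: measurable_funX.
- by move=> x _; rewrite lee_fin sqr_ge0.
apply: ge0_le_integral => //.
- by move=> x _; rewrite lee_fin.
- exact/measurable_EFinP.
- by apply/measurable_EFinP; apply: measurable_funM => //; exact: measurable_funX.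
move=> x _; rewrite lee_fin /q2 indicE.
case: (boolP (x \in ~` A)) => xA /=; last first.
  by rewrite mulr0n mulr0 mulr_ge0 // sqr_ge0.
rewrite mulr1n mulr1.
have hD : eps < `|Dx x|.
  move: xA; rewrite in_setC => /negP xA; rewrite ltNge; apply/negP => h.
  by apply: xA; apply/mem_set; rewrite /A /= in_itv /=.
have hq : q x <= 4 * K^+2.
  rewrite /q -real_normK ?num_real //.
  have : `|g (X0 x) - g (Xt x)| <= K + K.
    by apply: le_trans (ler_normB _ _) _; apply: lerD.
  move=> h; apply: le_trans (lerXn2r _ _ _ h) _; rewrite ?nnegrE ?addr_ge0 //.
  by have -> : (K + K) ^+ 2 = 4 * K ^+ 2 by ring.
apply: le_trans hq _.
have he : eps^+2 <= (X0 x - Xt x)^+2.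
  rewrite -[(X0 x - Xt x)^+2]real_normK ?num_real //; apply: ltW.
  by rewrite ltrXn2r // ltW.
rewrite mulrAC ler_pdivlMr ?exprn_gt0 //.
by apply: ler_wpM2l => //; apply: mulr_ge0 => //; exact: sqr_ge0.
Qed.

End Aux2.

Section Aux3.
Context {R : realType} {d : measure_display} {T : measurableType d}.
Variable P : probability T R.

Lemma L2sq (f1 f2 : T -> R) :
  (L2dist P f1 f2 `^ 2 = \int[P]_x ((f1 x - f2 x)^+2)%:E)%E.
Proof.
rewrite /L2dist poweR_Lnorm //; apply: eq_integral => x _.
change ((`|(f1 x - f2 x)%:E| `^ 2)%E = ((f1 x - f2 x) ^+ 2)%:E).
by rewrite /= powR_mulrn ?real_normK ?num_real.
Qed.

Lemma le_from_sq (N : \bar R) (c : R) : (0 <= N)%E -> (N `^ 2 <= c%:E)%E ->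
  (N <= (Num.sqrt c)%:E)%E.
Proof.
move=> N0; case: N N0 => [n| |] //=.
- rewrite lee_fin => n0; rewrite ?poweR_EFin lee_fin powR_mulrn // => h.
  by rewrite -(ger0_norm n0) -sqrtr_sqr; exact: ler_wsqrtr.
- by move=> _; rewrite pnatr_eq0.
Qed.

Lemma sq_from_le (N : \bar R) (v : R) : (0 <= N)%E -> (N <= v%:E)%E ->
  (N `^ 2 <= (v^+2)%:E)%E.
Proof.
move=> N0; case: N N0 => [n| |] //=.
rewrite !lee_fin => n0 nv; rewrite /= ?lee_fin powR_mulrn //.
by rewrite lerXn2r ?nnegrE //; exact: le_trans nv.
Qed.

Lemma real_bound (r dd L K2 v : R) : 0 <= v -> 0 <= K2 -> dd <= v^+2 -> 0 <= dd ->
  (forall eps, 0 < eps -> r <= L * eps^+2 + (4 * K2) / eps^+2 * dd) ->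
  r <= (L + 4 * K2) * v.
Proof.
move=> v0 K20 ddv dd0 h.
have [v00|vgt0] := eqVneq v 0.
  subst v.
  have dd00 : dd = 0 by apply/eqP; rewrite eq_le dd0 andbT; move: ddv; rewrite expr0n.
  rewrite mulr0; rewrite leNgt; apply/negP => r0.
  have L1 : 0 < `|L| + 1 by rewrite ltr_wpDl.
  set t := r / (`|L| + 1).
  have t0 : 0 < t by rewrite divr_gt0.
  have := h (Num.sqrt t); rewrite sqrtr_gt0 => /(_ t0).
  rewrite sqr_sqrtr; last exact: ltW.
  rewrite dd00 mulr0 addr0.
  have : L * t <= `|L| * t.
    by apply: ler_wpM2r; [exact: ltW | exact: real_ler_norm (num_real _)].
  have : `|L| * t < r.
    by rewrite /t mulrA ltr_pdivrMr // mulrDr mulr1 mulrC ltrDl.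
  move=> h1 h2 h3; lra.
have vp : 0 < v by rewrite lt0r vgt0.
have := h (Num.sqrt v); rewrite sqrtr_gt0 => /(_ vp).
rewrite sqr_sqrtr; last exact: ltW.
move=> h1.
apply: le_trans h1 _.
have : 4 * K2 / v * dd <= 4 * K2 / v * v^+2.
  by rewrite ler_wpM2l // divr_ge0 // mulr_ge0.
have -> : 4 * K2 / v * v^+2 = 4 * K2 * v by field; rewrite lt0r_neq0.
move=> h2; lra.
Qed.

End Aux3.

Unset Implicit Arguments. Set Strict Implicit.

Lemma FZ_meas (R : realType) (d : measure_display) (T : measurableType d)
  (dS : measure_display) (S : measurableType dS) (Z : int -> T -> S) (s t : int) :
  (forall n, measurable_fun setT (Z n)) ->
  forall A, F_Z Z s t A -> measurable A.
Proof.
move=> mZ; apply: smallest_sub; first exact: sigma_algebra_measurable.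
move=> _ [u [B [_ mB ->]]].
by have := mZ u measurableT B mB; rewrite setTI.
Qed.

Theorem lemma1 (R : realType) (d : measure_display) (T : measurableType d)
  (P : probability T R) (dS : measure_display) (S : measurableType dS)
  (X : int -> T -> R) (Z : int -> T -> S) (nu : nat -> R)
  (g : R -> R) (K L : R) :
  stationary P Z ->
  L2NED_some P X Z nu ->
  measurable_fun setT g ->
  (forall x, `|g x| <= K) ->
  p_variation P 2 g (X 0) L ->
  L2NED P (fun n w => g (X n w)) Z
    (fun k => Num.sqrt ((L + 4 * K ^+ 2) * nu k)).
Proof.
move=> [mZ _] [[mX statX] [nucv hX]] mg hg pv.
have K0 : 0 <= K by apply: le_trans (hg 0).
split; [split|split].
- by move=> n; exact: measurableT_comp.
- move=> m t B h mB.
  have mB' : forall i, measurable (g @^-1` B i).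
    by move=> i; have := mg measurableT (B i) (mB i); rewrite setTI.
  exact: (statX m t (fun i => g @^-1` B i) h mB').
- have h1 : (fun k => (L + 4 * K ^+ 2) * nu k) @ \oo --> 0.
    by rewrite -(mulr0 (L + 4 * K ^+ 2)); exact: cvgMl_tmp.
  have := cvg_comp _ _ h1 (@sqrt_continuous R 0).
  by rewrite sqrtr0.
move=> k W hW.
have [Xt [hXt hle]] := hX k.
set F := F_Z Z (- k%:Z) k%:Z in hW hXt.
have hF : forall A, F A -> measurable A := @FZ_meas R d T dS S Z _ _ mZ.
case: (hXt) => iX0 [hXtF [iXt _]].
have mXt : measurable_fun setT Xt := Fmeas_measurable hF hXtF.
have hh : Fmeas F (g \o Xt) := Fmeas_comp mg hXtF.
have bh : forall x, `|(g \o Xt) x| <= K by move=> x; exact: hg.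
have mY : measurable_fun setT (fun w => g (X 0 w)) by exact: measurableT_comp.
have kb := key hF K0 mY (fun x => hg _) hW hh bh.
apply: le_from_sq; first exact: Lnorm_ge0.
rewrite L2sq; apply: le_trans kb _.
have v0 : 0 <= nu k by rewrite -lee_fin; apply: le_trans hle; exact: Lnorm_ge0.
have hD : (\int[P]_x ((X 0 x - Xt x)^+2)%:E <= ((nu k)^+2)%:E)%E.
  by rewrite -L2sq; apply: sq_from_le hle; exact: Lnorm_ge0.
set ID := (\int[P]_x ((X 0 x - Xt x)^+2)%:E)%E in hD.
have ID0 : (0 <= ID)%E by apply: integral_ge0 => x _; rewrite lee_fin sqr_ge0.
have finID : ID \is a fin_num.
  by rewrite ge0_fin_numE // (le_lt_trans hD) ?ltry.
have mq : measurable_fun setT (fun x => (g (X 0 x) - g (Xt x))^+2).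
  by apply: measurable_funX; apply: measurable_funB; exact: measurableT_comp.
set Iq := (\int[P]_x ((g (X 0 x) - g (Xt x))^+2)%:E)%E.
have finIq : Iq \is a fin_num.
  apply: (integrable_fin_num measurableT (bint P (M := (K + K)^+2) mq _)).
  move=> x; rewrite normrX lerXn2r ?nnegrE ?addr_ge0 //.
  by apply: le_trans (ler_normB _ _) _; apply: lerD.
have vb := fun eps (e0 : 0 < eps) => varb mg (mX 0) mXt hg e0 pv.
rewrite -(fineK finIq) lee_fin.
apply: (real_bound (dd := fine ID) v0 (sqr_ge0 K)).
- by rewrite -lee_fin fineK.
- by rewrite fine_ge0.
move=> eps e0; rewrite -lee_fin fineK // EFinD [X in (_ + X)%E]EFinM fineK //.
exact: vb.
Qed.
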